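(* Let $H$ be a connected finite simple graph on $n$ vertices, where $n \in \{5,6\}$. If $\Delta(\overline{H}) > 1$, then $H$ is a weak König–Egerváry graph.
   Context: $\overline{H}$ denotes the complement of $H$. A graph $H$ is a weak König–Egerváry graph if $H$ has a matching $M$ and a vertex set $Q \subseteq V(H)$ with $|Q| \leq |M|$ such that $Q$ is a vertex cover of $H - M$. *)

(* Defs.v *)
(* A finite simple graph is a symmetric irreflexive
   relation e on a finType T (the vertex set). Edges are represented as
   2-element vertex sets [set x; y] with e x y. *)
From mathcomp Require Import all_boot.
Set Implicit Arguments. Unset Strict Implicit. Unset Printing Implicit Defensive.

Section Graphs.
Variable T : finType.

Definition simple_graph (e : rel T) : Prop := symmetric e /\ irreflexive e.

Definition connected_graph (e : rel T) : Prop := forall x y : T, connect e x y.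

Definition compl_rel (e : rel T) : rel T := fun x y => (x != y) && ~~ e x y.

Definition degree (e : rel T) (v : T) : nat := #|[set u | e v u]|.
Definition max_degree (e : rel T) : nat := \max_(v : T) degree e v.

Definition is_edge (e : rel T) (f : {set T}) : bool :=
  [exists x, exists y, e x y && (f == [set x; y])].

Definition matching (e : rel T) (M : {set {set T}}) : Prop :=
  (forall f, f \in M -> is_edge e f) /\
  (forall f g, f \in M -> g \in M -> f != g -> [disjoint f & g]).

Definition del_edges (e : rel T) (M : {set {set T}}) : rel T :=
  fun x y => e x y && ([set x; y] \notin M).

Definition vertex_cover (e : rel T) (Q : {set T}) : Prop :=
  forall x y, e x y -> (x \in Q) || (y \in Q).

Definition weak_KE (e : rel T) : Prop :=
  exists M : {set {set T}}, exists Q : {set T},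
    [/\ matching e M, #|Q| <= #|M| & vertex_cover (del_edges e M) Q].

End Graphs.

(* Main.v *)
From mathcomp Require Import all_boot.
Set Implicit Arguments. Unset Strict Implicit. Unset Printing Implicit Defensive.
Require Import Defs.
From Stdlib Require Import FunctionalExtensionality.

Fixpoint allsubs {A : Type} (P : seq A -> bool) (s : seq A) : bool :=
  match s with [::] => P [::] | x :: s' => if allsubs (fun l => P (x :: l)) s' then allsubs P s' else false end.
Fixpoint subs {A} (s : seq A) : seq (seq A) :=
  match s with [::] => [:: [::]] | x :: s' => let r := subs s' in r ++ map (cons x) r end.

Fixpoint hasl {A} (a : A -> bool) (s : seq A) : bool :=
  if s is x :: s' then (if a x then true else hasl a s') else false.
Fixpoint alll {A} (a : A -> bool) (s : seq A) : bool :=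
  if s is x :: s' then (if a x then alll a s' else false) else true.
Section N.
Variable n : nat.
Notation I := 'I_n.+1.
Definition toI (i : nat) : I := Ordinal (ltn_pmod i (ltn0Sn n)).
Definition enumI : seq I := [seq toI i | i <- iota 0 n.+1].
Definition pairs : seq (I*I) :=
  filter (fun p : I*I => p.1 < p.2) [seq (i,j) | i <- enumI, j <- enumI].
Definition eqo (x y : I) : bool := eqn x y.
Definition memI (x : I) (S : seq I) : bool := has (eqo x) S.
Definition eqp (p q : I*I) : bool := eqo p.1 q.1 && eqo p.2 q.2.
Definition memP (p : I*I) (E : seq (I*I)) : bool := has (eqp p) E.
Definition G (E : seq (I*I)) : rel I := fun x y => memP (x,y) E || memP (y,x) E.
Definition pdisj (p q : I*I) : bool :=
  [&& ~~ eqo p.1 q.1, ~~ eqo p.1 q.2, ~~ eqo p.2 q.1 & ~~ eqo p.2 q.2].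
Fixpoint uniqb (s : seq (I*I)) : bool :=
  match s with [::] => true | x :: s' => ~~ memP x s' && uniqb s' end.
Definition okb (E : seq (I*I)) (Ms : seq (I*I)) (Q : seq I) : bool :=
  if size Q <= size Ms then
  if alll (fun p => if memP p Ms then true else if memP (p.2,p.1) Ms then true else
                    if memI p.1 Q then true else memI p.2 Q) E then
  if alll (fun p => G E p.1 p.2) Ms then
  if uniqb Ms then
   alll (fun p => alll (fun q => eqp p q || pdisj p q) Ms) Ms
  else false else false else false else false.
Definition ncomp (E : seq (I*I)) (v : I) : nat :=
  count (fun u => ~~ eqo v u && ~~ G E v u) enumI.
Definition step (E : seq (I*I)) (R : seq I) : seq I :=
  foldl (fun R p => if memI p.1 R then (if memI p.2 R then R else p.2 :: R)
                    else if memI p.2 R then p.1 :: R else R) R E.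
Definition reach (E : seq (I*I)) : seq I := iter n (step E) [:: ord0].
Definition conn_b (E : seq (I*I)) : bool :=
  let R := reach E in
  if memI ord0 R then
    if alll (fun p : I*I => memI p.1 R == memI p.2 R) E then alll (fun y => memI y R) enumI
    else true
  else true.
Definition hyps (E : seq (I*I)) : bool :=
  if conn_b E then hasl (fun v => 1 < ncomp E v) enumI else false.
Fixpoint mats (s : seq (I*I)) : seq (seq (I*I)) :=
  match s with [::] => [:: [::]] | p :: s' => let r := mats s' in
    r ++ [seq p :: m | m <- r & all (pdisj p) m] end.
Definition search (E : seq (I*I)) (qss : seq (nat * seq (seq I))) : bool :=
  let ms := mats E in
  hasl (fun kq => hasl (fun Ms => if size Ms == kq.1 then hasl (fun Q => okb E Ms Q) kq.2 else false) ms) qss.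
Definition check : bool :=
  let qs := subs enumI in
  let qss := [seq (k, [seq Q <- qs | size Q == k]) | k <- [:: 3; 2; 1]] in
  allsubs (fun E => if hyps E then search E qss else true) pairs.
End N.
Lemma check4 : check 4. Proof. vm_compute. reflexivity. Qed.
Lemma check5 : check 5. Proof. vm_compute. reflexivity. Qed.

Section Proofs.
Variable n : nat.
Notation I := 'I_n.+1.

Lemma hasl_has A (a : pred A) s : hasl a s = has a s.
Proof. by elim: s => //= x s ->; case: (a x). Qed.
Lemma alll_all A (a : pred A) s : alll a s = all a s.
Proof. by elim: s => //= x s ->; case: (a x). Qed.
Lemma eqoE (x y : I) : eqo x y = (x == y).
Proof. by rewrite /eqo; apply/eqnP/eqP => [/val_inj|->]. Qed.
Lemma memIE (x : I) S : memI x S = (x \in S).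
Proof. by elim: S => //= a S IH; rewrite in_cons eqoE -IH. Qed.
Lemma eqpE (p q : I * I) : eqp p q = (p == q).
Proof. by case: p => a b; case: q => c d; rewrite /eqp /= !eqoE xpair_eqE. Qed.
Lemma memPE (p : I * I) E : memP p E = (p \in E).
Proof. by elim: E => //= a E IH; rewrite in_cons eqpE -IH. Qed.
Lemma uniqbE (s : seq (I * I)) : uniqb s = uniq s.
Proof. by elim: s => //= a s ->; rewrite memPE. Qed.
Lemma mem_enumI (x : I) : x \in enumI n.
Proof.
apply/mapP; exists (val x); first by rewrite mem_iota ltn_ord.
by apply: val_inj; rewrite /= modn_small.
Qed.

Lemma okb_sound (E : seq (I*I)) (Ms : seq (I*I)) (Q : seq I) : okb E Ms Q -> weak_KE (G E).
Proof.
rewrite /okb; case: ifP => // h1; case: ifP => // h2; case: ifP => // h3.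
case: ifP => // h4 h5.
rewrite uniqbE in h4; rewrite alll_all in h2; rewrite alll_all in h3; rewrite alll_all in h5.
have disj : forall p q, p \in Ms -> q \in Ms -> p != q ->
   [/\ p.1 != q.1, p.1 != q.2, p.2 != q.1 & p.2 != q.2].
  move=> p q pM qM pq; move/allP: h5 => /(_ p pM); rewrite alll_all.
  move/allP => /(_ q qM); rewrite eqpE (negPf pq) /= /pdisj !eqoE.
  by case/and4P.
pose M : {set {set I}} := [set [set p.1; p.2] | p in Ms].
pose Qs : {set I} := [set x in Q].
have injM : {in Ms &, injective (fun p : I * I => [set p.1; p.2])}.
  move=> p q pM qM /= eqS; apply/eqP; apply/negP => /negP pq.
  have [d1 d2 _ _] := disj p q pM qM pq.
  have : p.1 \in [set q.1; q.2] by rewrite -eqS !inE eqxx.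
  by rewrite !inE (negPf d1) (negPf d2).
exists M, Qs; split.
- split.
  + move=> f /imsetP [p pM ->]; apply/existsP; exists p.1; apply/existsP; exists p.2.
    by rewrite eqxx andbT; move/allP: h3 => /(_ p pM).
  + move=> f g /imsetP [p pM ->] /imsetP [q qM ->] fg.
    have pq : p != q by apply: contraNneq fg => ->.
    have [d1 d2 d3 d4] := disj p q pM qM pq.
    rewrite disjoint_subset; apply/subsetP => z; rewrite !inE => /orP[] /eqP ->;
      by rewrite ?inE negb_or ?d1 ?d2 ?d3 ?d4.
- rewrite cardsE (card_in_imset injM) (card_uniqP h4).
  exact: leq_trans (card_size _) h1.
- have key : forall a b, (a, b) \in E -> [set a; b] \notin M -> (a \in Qs) || (b \in Qs).
    move=> a b abE abM; move/allP: h2 => /(_ _ abE) /=.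
    rewrite !inE !memPE !memIE.
    case: ifP => [abMs|_]; first by rewrite (imset_f (fun p : I * I => [set p.1; p.2]) abMs) in abM.
    case: ifP => [baMs|_]; last exact: id.
    by rewrite setUC (imset_f (fun p : I * I => [set p.1; p.2]) baMs) in abM.
  move=> x y /andP [] /orP [] hE hM; rewrite memPE in hE.
  + exact: key.
  + by rewrite orbC; apply: key => //; rewrite setUC.
Qed.

Lemma allsubsP A (P : seq A -> bool) s : allsubs P s -> forall f, P (filter f s).
Proof.
elim: s P => [|x s IH] P //=.
case: ifP => // H1 H2 f; case: (f x); [exact: (IH _ H1) | exact: IH].
Qed.

Lemma G_filter (e : rel I) : simple_graph e ->
  e = G (filter (fun p : I * I => e p.1 p.2) (pairs n)).
Proof.
case=> sym irr; apply: functional_extensionality => x.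
apply: functional_extensionality => y.
have inP : forall a b : I, (a, b) \in [seq (i, j) | i <- enumI n, j <- enumI n].
  by move=> a b; apply: (allpairs_f pair); apply: mem_enumI.
rewrite /G !memPE /pairs !mem_filter /= !inP !andbT (sym y x).
have [h|h|h] := ltngtP x y; rewrite ?andbT ?andbF ?orbF //=.
by rewrite (val_inj h) irr.
Qed.

Lemma hyps_ok (E : seq (I*I)) : connected_graph (G E) ->
  (exists v, 1 < degree (compl_rel (G E)) v) -> hyps E.
Proof.
move=> hc [v hv]; rewrite /hyps.
have -> : conn_b E.
  rewrite /conn_b; case: ifP => // h0; case: ifP => // hcl; rewrite alll_all in hcl.
  rewrite alll_all; apply/allP => y _; rewrite memIE.
  have cl : closed (G E) (reach E).
    move=> a b; rewrite /G !memPE => /orP [] ab; move/allP: hcl => hcl.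
    * by have /eqP := hcl _ ab; rewrite /= !memIE.
    * by have /eqP := hcl _ ab; rewrite /= !memIE.
  by rewrite -(closed_connect cl (hc ord0 y)) -memIE.
rewrite hasl_has; apply/hasP; exists v; first exact: mem_enumI.
rewrite /ncomp.
have -> : count (fun u => ~~ eqo v u && ~~ G E v u) (enumI n) =
          count (compl_rel (G E) v) (enumI n).
  by apply: eq_count => u; rewrite eqoE.
apply: (leq_trans hv); rewrite /degree -size_filter.
apply: leq_trans (card_size _); apply: subset_leq_card.
by apply/subsetP => u; rewrite inE mem_filter mem_enumI andbT.
Qed.

Lemma main_n : check n -> forall e : rel I, simple_graph e -> connected_graph e ->
  (exists v, 1 < degree (compl_rel e) v) -> weak_KE e.
Proof.
move=> hc e hs; rewrite (G_filter hs) => hcon hdeg.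
move: hc; rewrite /check => /allsubsP /(_ (fun p : I * I => e p.1 p.2)).
rewrite (hyps_ok hcon hdeg) /search; rewrite hasl_has => /hasP [kq _].
rewrite hasl_has => /hasP [Ms _]; case: ifP => // _.
rewrite hasl_has => /hasP [Q _]; exact: okb_sound.
Qed.
End Proofs.

Lemma transfer (T T' : finType) (f : T -> T') (g : T' -> T) (fK : cancel f g) (gK : cancel g f)
  (e : rel T) :
  (forall e' : rel T', simple_graph e' -> connected_graph e' ->
     (exists v, 1 < degree (compl_rel e') v) -> weak_KE e') ->
  simple_graph e -> connected_graph e -> 1 < max_degree (compl_rel e) -> weak_KE e.
Proof.
move=> Hmain [sym irr] hc hmax.
pose e' := fun x y => e (g x) (g y).
have finj := can_inj fK; have ginj := can_inj gK.
have e'f : forall a b, e' (f a) (f b) = e a b by move=> a b; rewrite /e' !fK.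
have : weak_KE e'.
  apply: Hmain.
  - by split; [move=> x y; apply: sym | move=> x; apply: irr].
  - move=> x y; rewrite -(gK x) -(gK y).
    have /connectP [p pth ->] := hc (g x) (g y).
    elim: p (g x) pth => [|c p IH] a //= /andP [eac pth].
    apply: connect_trans (IH _ pth); apply: connect1; by rewrite e'f.
  - case: (boolP [exists v, 1 < degree (compl_rel e) v]) => [/existsP [v hv] | /existsPn hn]; last first.
      move: hmax; rewrite ltnNge; case/negP.
      by apply/bigmax_leqP => v _; rewrite leqNgt hn.
    exists (f v); apply: (leq_trans hv); rewrite /degree.
    rewrite -(card_imset _ finj); apply: subset_leq_card.
    apply/subsetP => u /imsetP [w]; rewrite !inE /compl_rel => /andP [vw nw] ->.
    by rewrite (inj_eq finj) vw e'f nw.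
case=> M' [Q' [[hedge hdisj] hcard hcov]].
exists ((fun s : {set T'} => g @: s) @: M'), (g @: Q'); split.
- split.
  + move=> s /imsetP [t tM ->]; have /existsP [x /existsP [y /andP [exy /eqP ->]]] := hedge t tM.
    apply/existsP; exists (g x); apply/existsP; exists (g y); apply/andP; split; first exact: exy.
    by rewrite imsetU1 imset_set1.
  + move=> s1 s2 /imsetP [t1 t1M ->] /imsetP [t2 t2M ->] neq.
    have t12 : t1 != t2 by apply: contraNneq neq => ->.
    have := hdisj _ _ t1M t2M t12; rewrite -!setI_eq0 => /eqP h.
    by rewrite -imsetI ?h ?imset0 // => a b _ _; apply: ginj.
- by rewrite (card_imset _ ginj) (card_imset _ (imset_inj ginj)).
- move=> x y /andP [exy nM].
  have : del_edges e' M' (f x) (f y).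
    rewrite /del_edges e'f exy /=; apply: contra nM => fM.
    apply/imsetP; exists [set f x; f y] => //.
    by rewrite imsetU1 imset_set1 !fK.
  move/hcov => /orP [] h; apply/orP; [left | right]; apply/imsetP; eexists; eauto; by rewrite fK.
Qed.

Theorem proposition4p13 (T : finType) (e : rel T) :
  simple_graph e -> connected_graph e ->
  (#|T| = 5 \/ #|T| = 6) ->
  1 < max_degree (compl_rel e) ->
  weak_KE e.
Proof.
move=> hs hc [H|H].
- apply: (@transfer T 'I_5 (fun x => cast_ord H (enum_rank x))
            (fun y => enum_val (cast_ord (esym H) y))) => //.
  + by move=> x; rewrite cast_ordK enum_rankK.
  + by move=> y; rewrite enum_valK cast_ordKV.
  + exact: (main_n check4).
- apply: (@transfer T 'I_6 (fun x => cast_ord H (enum_rank x))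
            (fun y => enum_val (cast_ord (esym H) y))) => //.
  + by move=> x; rewrite cast_ordK enum_rankK.
  + by move=> y; rewrite enum_valK cast_ordKV.
  + exact: (main_n check5).
Qed.
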